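(* Let $p$ be one of $(12,\emptyset,\{0\})$, $(12,\{0\},\{1\})$, $(12,\{0\},\{2\})$, or any pattern in the same symmetry class as one of these. Then for all $n\ge1$, $a_n(p)=(n-1)!$.
   Context: For $n\ge1$, $\mathcal S_n$ is the set of permutations $\pi=\pi_1\cdots\pi_n$ of $[n]=\{1,\dots,n\}$. A bi-vincular pattern of length $k$ is a triple $p=(\sigma,X,Y)$ with $\sigma\in\mathcal S_k$ and $X,Y\subseteq\{0,1,\dots,k\}$ (written e.g. $(12,\{0\},\{1\})$). A permutation $\pi\in\mathcal S_n$ contains $p$ if there are indices $1\le i_1<\dots<i_k\le n$ such that $(\pi_{i_1},\dots,\pi_{i_k})$ is order-isomorphic to $\sigma$ and, letting $j_1<\dots<j_k$ be the values $\pi_{i_1},\dots,\pi_{i_k}$ sorted increasingly and setting $i_0=j_0=0$, $i_{k+1}=j_{k+1}=n+1$, one has $i_{x+1}=i_x+1$ for all $x\in X$ and $j_{y+1}=j_y+1$ for all $y\in Y$. Otherwise $\pi$ avoids $p$; $a_n(p)$ is the number of $\pi\in\mathcal S_n$ avoiding $p$. Symmetries: $p^{i}=(\sigma^{-1},Y,X)$, $p^{r}=(\sigma^{r},\{k-x:x\in X\},Y)$, $p^{c}=(\sigma^{c},X,\{k-y:y\in Y\})$ with $\sigma^r_j=\sigma_{k+1-j}$, $\sigma^c_j=k+1-\sigma_j$; the symmetry class of $p$ consists of all patterns obtained from $p$ by finitely many applications of these three maps. *)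

(* Defs.v *)
From mathcomp Require Import all_boot all_fingroup.
Set Implicit Arguments. Unset Strict Implicit. Unset Printing Implicit Defensive.

(* Permutations of [n] are modelled by 'S_n = {perm 'I_n} (values 0..n-1,
   i.e. shifted down by one; positions likewise 0..n-1). *)

Record bvpat := BVPat {
  bv_k : nat;
  bv_sigma : 'S_bv_k;
  bv_X : {set 'I_bv_k.+1};
  bv_Y : {set 'I_bv_k.+1} }.

(* Positions/values are shifted to 1-based, with i_0 = j_0 = 0 and
   i_{k+1} = j_{k+1} = n+1 ; the lists below are (i_0, ..., i_{k+1}) and
   (j_0, ..., j_{k+1}). *)
Definition occ_at (n : nat) (p : bvpat) (pi : 'S_n) (i : {ffun 'I_(bv_k p) -> 'I_n}) : bool :=
  let k := bv_k p in
  let ps := 0 :: [seq (i a).+1 | a <- enum 'I_k] ++ [:: n.+1] in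
  let js := 0 :: sort leq [seq (pi (i a)).+1 | a <- enum 'I_k] ++ [:: n.+1] in
  [&& [forall a : 'I_k, forall b : 'I_k, (a < b) ==> (i a < i b)],
      [forall a : 'I_k, forall b : 'I_k,
         (pi (i a) < pi (i b)) == (bv_sigma p a < bv_sigma p b)],
      [forall x in bv_X p, nth 0 ps x.+1 == (nth 0 ps x).+1] &
      [forall y in bv_Y p, nth 0 js y.+1 == (nth 0 js y).+1]].

Definition contains (n : nat) (p : bvpat) (pi : 'S_n) : bool :=
  [exists i : {ffun 'I_(bv_k p) -> 'I_n}, occ_at pi i].

Definition avoids (n : nat) (p : bvpat) (pi : 'S_n) : bool := ~~ contains p pi.

Definition a_n (p : bvpat) (n : nat) : nat := #|[set pi : 'S_n | avoids p pi]|.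

Definition rev_perm (k : nat) : 'S_k := perm (@rev_ord_inj k).

Definition pat_inv (p : bvpat) : bvpat :=
  @BVPat (bv_k p) (bv_sigma p)^-1 (bv_Y p) (bv_X p).

(* p^r = (sigma^r, {k - x : x in X}, Y), sigma^r_j = sigma_{k+1-j};
   note (s * t) x = t (s x) for mathcomp permutations. *)
Definition pat_rev (p : bvpat) : bvpat :=
  @BVPat (bv_k p) (rev_perm (bv_k p) * bv_sigma p) (@rev_ord (bv_k p).+1 @: bv_X p) (bv_Y p).

Definition pat_comp (p : bvpat) : bvpat :=
  @BVPat (bv_k p) (bv_sigma p * rev_perm (bv_k p)) (bv_X p) (@rev_ord (bv_k p).+1 @: bv_Y p).

Inductive sym_class (p : bvpat) : bvpat -> Prop :=
| sc_refl : sym_class p p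
| sc_inv q : sym_class p q -> sym_class p (pat_inv q)
| sc_rev q : sym_class p q -> sym_class p (pat_rev q)
| sc_comp q : sym_class p q -> sym_class p (pat_comp q).

Definition pat1 : bvpat := @BVPat 2 1 set0 [set (@inord 2 0)].
Definition pat2 : bvpat := @BVPat 2 1 [set (@inord 2 0)] [set (@inord 2 1)].
Definition pat3 : bvpat := @BVPat 2 1 [set (@inord 2 0)] [set (@inord 2 2)].

(* Main.v *)
Require Import Defs.
From mathcomp Require Import all_boot all_fingroup.
From mathcomp Require Import zify.
Set Implicit Arguments. Unset Strict Implicit. Unset Printing Implicit Defensive.

Lemma sort2 (x y : nat) : sort leq [:: x; y] = [:: minn x y; maxn x y].
Proof.
rewrite /minn /maxn /sort /=; case: (leqP x y) => h /=.
- case: ltnP => h2 //. have -> : x = y by lia. by [].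
- by rewrite ltnNge (ltnW h).
Qed.

Definition mk2 (s : 'S_2) (X Y : {set 'I_3}) : bvpat := @BVPat 2 s X Y.

Definition cnd (n : nat) (x : 'I_3) (a b : nat) : bool :=
  match val x with 0 => a == 0 | 1 => b == a.+1 | _ => b.+1 == n end.

Definition E n (t : bool) (X Y : {set 'I_3}) (pi : 'S_n) (a b : 'I_n) : bool :=
  [&& a != b, ((a < b) == (pi a < pi b)) == t,
      [forall x in X, cnd n x (minn a b) (maxn a b)] &
      [forall y in Y, cnd n y (minn (pi a) (pi b)) (maxn (pi a) (pi b))]].

Definition Cn n t X Y (pi : 'S_n) := [exists a, exists b, E t X Y pi a b].

Definition s2 (s : 'S_2) := s ord0 < s ord_max.

Lemma enum2 : enum 'I_2 = [:: ord0; ord_max].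
Proof. apply: (inj_map val_inj); by rewrite val_enum_ord. Qed.

Lemma ord2 (a : 'I_2) : a = ord0 \/ a = ord_max.
Proof. case: a => [[|[|m]]] H; [left|right|]; try by apply: val_inj. by []. Qed.

Lemma ord3 (x : 'I_3) : x = inord 0 \/ x = inord 1 \/ x = inord 2.
Proof.
case: x => [[|[|[|m]]]] H; try by [].
- by left; apply: val_inj; rewrite /= inordK.
- by right; left; apply: val_inj; rewrite /= inordK.
- by right; right; apply: val_inj; rewrite /= inordK.
Qed.

Lemma nth4 (u v w : nat) (x : 'I_3) :
  (nth 0 [:: u.+1; v.+1; w.+1] x == (nth 0 [:: 0; u.+1; v.+1; w.+1] x).+1)
  = cnd w x u v.
Proof. by case: x => [[|[|[|m]]]] H. Qed.

Lemma Esym n t (X Y : {set 'I_3}) (pi : 'S_n) a b : E t X Y pi a b = E t X Y pi b a.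
Proof.
rewrite /E minnC maxnC (minnC (pi a)) (maxnC (pi a)) eq_sym.
case: (eqVneq a b) => [->//|neq] /=.
have npi : (pi a : nat) != pi b by rewrite (inj_eq val_inj) (inj_eq perm_inj).
have nab : (a : nat) != b by [].
have -> : (b < a) = ~~ (a < b) by lia.
have -> : (pi b < pi a) = ~~ (pi a < pi b) by lia.
by case: (a < b); case: (pi a < pi b).
Qed.

Lemma char n s X Y (pi : 'S_n) : contains (mk2 s X Y) pi = Cn (s2 s) X Y pi.
Proof.
rewrite /contains /occ_at /Cn /=; rewrite enum2 /=.
apply/existsP/existsP.
- case=> i; rewrite sort2 minnSS maxnSS /= => /and4P [H1 H2 H3 H4].
  have lt01 : i ord0 < i ord_max by move/forallP: H1 => /(_ ord0) /forallP /(_ ord_max).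
  exists (i ord0); apply/existsP; exists (i ord_max).
  rewrite /E; have -> : minn (i ord0) (i ord_max) = i ord0 by lia.
  have -> : maxn (i ord0) (i ord_max) = i ord_max by lia.
  apply/and4P; split.
  + by rewrite neq_ltn lt01.
  + move/forallP: H2 => /(_ ord0) /forallP /(_ ord_max) /eqP ->.
    by rewrite lt01 /s2; case: (s ord0 < s ord_max).
  + apply/forallP => x; apply/implyP => xX.
    by rewrite -nth4; move/forallP: H3 => /(_ x) /implyP /(_ xX).
  + apply/forallP => x; apply/implyP => xX.
    by rewrite -nth4; move/forallP: H4 => /(_ x) /implyP /(_ xX).
- case=> a0 /existsP [b0].
  wlog lt01 : a0 b0 / a0 < b0.
    move=> W HE; case: (ltngtP a0 b0) => h; first exact: W h HE.
    - by rewrite Esym in HE; exact: W h HE.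
    - have e : a0 = b0 by apply: val_inj.
      by move: HE; rewrite /E e eqxx.
  rewrite /E => /and4P [H1 H2 H3 H4].
  exists [ffun x : 'I_2 => if x == ord0 then a0 else b0].
  rewrite !ffunE /= sort2 minnSS maxnSS /=.
  move: H3 H4.
  have -> : minn a0 b0 = a0 by lia.
  have -> : maxn a0 b0 = b0 by lia.
  move=> H3 H4.
  apply/and4P; split.
  + apply/forallP => x; apply/forallP => y; rewrite !ffunE.
    by case: (ord2 x) => ->; case: (ord2 y) => ->.
  + move: H2; rewrite lt01 /s2 => H2.
    apply/forallP => x; apply/forallP => y; rewrite !ffunE.
    case: (ord2 x) => ->; case: (ord2 y) => -> //=; rewrite ?ltnn //;
      try by move: H2; case: (pi a0 < pi b0); case: (s ord0 < s ord_max).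
    * have npi : (pi a0 : nat) != pi b0.
        by rewrite (inj_eq val_inj) (inj_eq perm_inj) neq_ltn lt01.
      have ns : (s ord0 : nat) != s ord_max.
        by rewrite (inj_eq val_inj) (inj_eq perm_inj).
      have -> : (pi b0 < pi a0) = ~~ (pi a0 < pi b0) by lia.
      have -> : (s ord_max < s ord0) = ~~ (s ord0 < s ord_max) by lia.
      by move: H2; case: (pi a0 < pi b0); case: (s ord0 < s ord_max).
  + apply/forallP => x; apply/implyP => xX.
    by rewrite nth4; move/forallP: H3 => /(_ x) /implyP /(_ xX).
  + apply/forallP => x; apply/implyP => xX.
    by rewrite nth4; move/forallP: H4 => /(_ x) /implyP /(_ xX).
Qed.

Lemma rev_permE n (x : 'I_n) : (rev_perm n x : nat) = n.-1 - x.
Proof. rewrite /rev_perm permE /=; have := ltn_ord x; lia. Qed.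

Lemma rrK n (x : 'I_n) : rev_perm n (rev_perm n x) = x.
Proof. apply: val_inj => /=; rewrite !rev_permE; have := ltn_ord x; lia. Qed.

Lemma s2key (s : 'S_2) : s2 s = (s ord0 == ord0).
Proof.
rewrite /s2.
have ne : s ord0 != s ord_max by rewrite (inj_eq perm_inj).
case: (ord2 (s ord0)) => e; rewrite e in ne *.
- case: (ord2 (s ord_max)) => e2; rewrite e2 in ne *; by [].
- case: (ord2 (s ord_max)) => e2; rewrite e2 in ne *; by [].
Qed.

Lemma s2inv (s : 'S_2) : s2 s^-1 = s2 s.
Proof.
rewrite !s2key; apply/eqP/eqP => h.
- by rewrite -{1}h permKV.
- by rewrite -{1}h permK.
Qed.

Lemma s2rev (s : 'S_2) : s2 (rev_perm 2 * s) = ~~ s2 s.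
Proof.
rewrite /s2 !permM.
have -> : rev_perm 2 ord0 = ord_max by apply: val_inj => /=; rewrite rev_permE.
have -> : rev_perm 2 ord_max = ord0 by apply: val_inj => /=; rewrite rev_permE.
have ne : (s ord0 : nat) != s ord_max by rewrite (inj_eq val_inj) (inj_eq perm_inj).
lia.
Qed.

Lemma s2comp (s : 'S_2) : s2 (s * rev_perm 2) = ~~ s2 s.
Proof.
rewrite /s2 !permM !rev_permE.
have ne : (s ord0 : nat) != s ord_max by rewrite (inj_eq val_inj) (inj_eq perm_inj).
have := ltn_ord (s ord0); have := ltn_ord (s ord_max).
lia.
Qed.

Lemma cndrev n (x : 'I_3) (A B : nat) : A < n -> B < n ->
  cnd n (rev_ord x) (minn (n.-1 - A) (n.-1 - B)) (maxn (n.-1 - A) (n.-1 - B))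
  = cnd n x (minn A B) (maxn A B).
Proof. case: x => [[|[|[|m]]]] H //= hA hB; rewrite /cnd /=; lia. Qed.

Lemma cndrev2 n (x : 'I_3) (A B : nat) : A < n -> B < n ->
  cnd n (rev_ord x) (minn A B) (maxn A B)
  = cnd n x (minn (n.-1 - A) (n.-1 - B)) (maxn (n.-1 - A) (n.-1 - B)).
Proof. case: x => [[|[|[|m]]]] H //= hA hB; rewrite /cnd /=; lia. Qed.

Lemma forall_imset (T : finType) (f : T -> T) (X : {set T}) (P : pred T) :
  [forall x in f @: X, P x] = [forall x in X, P (f x)].
Proof.
apply/forallP/forallP => h x.
- apply/implyP => xX; by have := h (f x); rewrite imset_f.
- apply/implyP => /imsetP [y yX ->]; by have := h y; rewrite yX.
Qed.

Lemma Einv n t (X Y : {set 'I_3}) (pi : 'S_n) a b :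
  E t X Y pi^-1 (pi a) (pi b) = E t Y X pi a b.
Proof.
rewrite /E !permK (inj_eq perm_inj).
apply/and4P/and4P => -[h1 h2 h3 h4]; split => //;
  by move: h2; case: (a < b); case: (pi a < pi b).
Qed.

Lemma Cinv n t (X Y : {set 'I_3}) (pi : 'S_n) : Cn t Y X pi = Cn t X Y pi^-1.
Proof.
rewrite /Cn; apply/existsP/existsP.
- case=> a /existsP [b H]; exists (pi a); apply/existsP; exists (pi b).
  by rewrite Einv.
- case=> a /existsP [b H]; exists ((pi^-1)%g a); apply/existsP; exists ((pi^-1)%g b).
  by rewrite -Einv !permKV.
Qed.

Lemma Erev n t (X Y : {set 'I_3}) (pi : 'S_n) a b :
  E t X Y (rev_perm n * pi) a b = E (~~ t) (@rev_ord 3 @: X) Y pi (rev_perm n a) (rev_perm n b).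
Proof.
rewrite /E !permM.
case: (eqVneq a b) => [->|neq]; first by rewrite !eqxx.
rewrite (inj_eq perm_inj) neq /=.
have ha := ltn_ord a; have hb := ltn_ord b.
congr (_ && (_ && _)).
- rewrite !rev_permE.
  have nab : (a : nat) != b by [].
  have -> : (n.-1 - a < n.-1 - b) = ~~ (a < b) by lia.
  by case: (a < b); case: (_ < _); case: t.
- rewrite forall_imset; apply: eq_forallb => x.
  by rewrite !rev_permE cndrev.
Qed.

Lemma Crev n t (X Y : {set 'I_3}) (pi : 'S_n) :
  Cn (~~ t) (@rev_ord 3 @: X) Y pi = Cn t X Y (rev_perm n * pi).
Proof.
rewrite /Cn; apply/existsP/existsP.
- case=> a /existsP [b H]; exists (rev_perm n a); apply/existsP; exists (rev_perm n b).
  by rewrite Erev !rrK.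
- case=> a /existsP [b H]; exists (rev_perm n a); apply/existsP; exists (rev_perm n b).
  by rewrite -Erev.
Qed.

Lemma Ecomp n t (X Y : {set 'I_3}) (pi : 'S_n) (a b : 'I_n) :
  E (~~ t) X (@rev_ord 3 @: Y) pi a b = E t X Y (pi * rev_perm n) a b.
Proof.
rewrite /E !permM.
case: (eqVneq a b) => [->|neq]; first by [].
rewrite /=.
have ha := ltn_ord (pi a); have hb := ltn_ord (pi b).
congr (_ && (_ && _)).
- rewrite !rev_permE.
  have nab : (pi a : nat) != pi b by rewrite (inj_eq val_inj) (inj_eq perm_inj).
  have -> : (n.-1 - pi a < n.-1 - pi b) = ~~ (pi a < pi b) by lia.
  by case: (a < b); case: (_ < _); case: t.
- rewrite forall_imset; apply: eq_forallb => x.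
  by rewrite !rev_permE cndrev2.
Qed.

Lemma Ccomp n t (X Y : {set 'I_3}) (pi : 'S_n) :
  Cn (~~ t) X (@rev_ord 3 @: Y) pi = Cn t X Y (pi * rev_perm n).
Proof.
rewrite /Cn; apply: eq_existsb => a; apply: eq_existsb => b; exact: Ecomp.
Qed.

Lemma an_char n s (X Y : {set 'I_3}) : a_n (mk2 s X Y) n = #|[set pi : 'S_n | ~~ Cn (s2 s) X Y pi]|.
Proof. by rewrite /a_n; apply: eq_card => pi; rewrite !inE /avoids char. Qed.

Lemma an_inv n s (X Y : {set 'I_3}) : a_n (mk2 s^-1 Y X) n = a_n (mk2 s X Y) n.
Proof.
rewrite !an_char s2inv.
rewrite -(card_preimset [set pi : 'S_n | ~~ Cn (s2 s) X Y pi] (@invg_inj _)).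
by apply: eq_card => pi; rewrite !inE Cinv.
Qed.

Lemma an_rev n s (X Y : {set 'I_3}) : a_n (mk2 (rev_perm 2 * s) (@rev_ord 3 @: X) Y) n = a_n (mk2 s X Y) n.
Proof.
rewrite !an_char s2rev.
rewrite -(card_preimset [set pi : 'S_n | ~~ Cn (s2 s) X Y pi] (mulgI (rev_perm n))).
by apply: eq_card => pi; rewrite !inE Crev.
Qed.

Lemma an_comp n s (X Y : {set 'I_3}) : a_n (mk2 (s * rev_perm 2) X (@rev_ord 3 @: Y)) n = a_n (mk2 s X Y) n.
Proof.
rewrite !an_char s2comp.
rewrite -(card_preimset [set pi : 'S_n | ~~ Cn (s2 s) X Y pi] (mulIg (rev_perm n))).
by apply: eq_card => pi; rewrite !inE Ccomp.
Qed.

Lemma card_fix m (x y : 'I_m) : #|[set pi : 'S_m | pi x == y]| = m.-1`!.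
Proof.
rewrite -(card_preimset [set pi : 'S_m | pi x == y] (mulIg (tperm x y))).
have -> : #|(fun pi : 'S_m => (pi * tperm x y)%g) @^-1: [set pi : 'S_m | pi x == y]|
          = #|perm_on [set~ x]|.
  apply: eq_card => pi; rewrite !inE permM.
  have -> : (tperm x y (pi x) == y) = (pi x == x).
    by rewrite -{2}(tpermL x y) (inj_eq perm_inj).
  apply/eqP/subsetP => [e z|h].
  - rewrite !inE; apply: contra => /eqP ->; by rewrite e.
  - apply/eqP; apply: contraT => ne; have := h x; rewrite !inE eqxx; by apply.
by rewrite card_perm cardsC1 card_ord.
Qed.

Lemma forall_set0 (T : finType) (P : pred T) : [forall x in (set0 : {set T}), P x] = true.
Proof. by apply/forallP => x; rewrite inE. Qed.

Lemma forall_set1 (T : finType) (z : T) (P : pred T) : [forall x in [set z], P x] = P z.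
Proof.
apply/forallP/idP => [h|h x]; first by have := h z; rewrite inE eqxx.
by apply/implyP; rewrite inE => /eqP ->.
Qed.

Lemma cnd0 n A B : cnd n (inord 0 : 'I_3) A B = (A == 0). Proof. rewrite /cnd; have -> : val (inord 0 : 'I_3) = 0 by exact: inordK. by []. Qed.
Lemma cnd1 n A B : cnd n (inord 1 : 'I_3) A B = (B == A.+1). Proof. rewrite /cnd; have -> : val (inord 1 : 'I_3) = 1 by exact: inordK. by []. Qed.
Lemma cnd2 n A B : cnd n (inord 2 : 'I_3) A B = (B.+1 == n). Proof. rewrite /cnd; have -> : val (inord 2 : 'I_3) = 2 by exact: inordK. by []. Qed.

Lemma s2one : s2 1 = true. Proof. by rewrite /s2 !perm1. Qed.

Lemma count1 m : a_n (mk2 1 set0 [set inord 0]) m.+1 = m`!.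
Proof.
rewrite an_char s2one -(card_fix (ord_max : 'I_m.+1) ord0).
apply: eq_card => pi; rewrite !inE.
apply/idP/idP.
- move=> h; apply: contraR h => ne.
  apply/existsP; exists ((pi^-1)%g ord0); apply/existsP; exists ord_max.
  rewrite /E forall_set0 forall_set1 cnd0 permKV.
  have ha : ((pi^-1)%g ord0 : nat) != m.
    apply: contra ne => e; have e2 : (pi^-1)%g ord0 = ord_max by apply: val_inj; exact/eqP.
    by rewrite -e2 permKV.
  have hp : (pi ord_max : nat) != 0 by [].
  have := ltn_ord ((pi^-1)%g ord0).
  move=> hlt; apply/and4P; split => //=; lia.
- move=> h; apply/existsP => -[a /existsP [b]].
  rewrite /E forall_set0 forall_set1 cnd0 => /and4P [h1 h2 _ h3].
  have key : forall c : 'I_m.+1, ((pi c : nat) == 0) = ((c : nat) == m).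
    move=> c; have := inj_eq (@perm_inj _ pi) c ord_max; rewrite (eqP h); exact.
  have k1 := key a; have k2 := key b.
  have h1' : (a : nat) != b by [].
  have := ltn_ord a; have := ltn_ord b; have := ltn_ord (pi a); have := ltn_ord (pi b).
  lia.
Qed.

Lemma count2 m : a_n (mk2 1 [set inord 0] [set inord 1]) m.+1 = m`!.
Proof.
rewrite an_char s2one -(card_fix (ord0 : 'I_m.+1) ord_max).
apply: eq_card => pi; rewrite !inE.
apply/idP/idP.
- move=> h; apply: contraR h => ne.
  have hv : (pi ord0 : nat) < m.
    have := ltn_ord (pi ord0); have : (pi ord0 : nat) != m by []. lia.
  set b := (pi^-1)%g (inord (pi ord0).+1).
  have hb : (pi b : nat) = (pi ord0).+1 by rewrite /b permKV inordK.
  have bn0 : (b : nat) != 0.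
    apply/eqP => e; have e2 : b = ord0 by apply: val_inj.
    by move: hb; rewrite e2; lia.
  apply/existsP; exists ord0; apply/existsP; exists b.
  rewrite /E !forall_set1 cnd0 cnd1 hb.
  apply/and4P; split => //=; try lia; by rewrite eq_sym.
- move=> h; apply/existsP => -[a /existsP [b]].
  rewrite /E !forall_set1 cnd0 => /and4P [h1 h2 h3 _].
  have key : forall c : 'I_m.+1, ((pi c : nat) == m) = ((c : nat) == 0).
    move=> c; have := inj_eq (@perm_inj _ pi) c ord0; rewrite (eqP h); exact.
  have k1 := key a; have k2 := key b.
  have h1' : (a : nat) != b by [].
  have := ltn_ord a; have := ltn_ord b; have := ltn_ord (pi a); have := ltn_ord (pi b).
  lia.
Qed.

Lemma count3 m : a_n (mk2 1 [set inord 0] [set inord 2]) m.+1 = m`!.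
Proof.
rewrite an_char s2one -(card_fix (ord0 : 'I_m.+1) ord_max).
apply: eq_card => pi; rewrite !inE.
apply/idP/idP.
- move=> h; apply: contraR h => ne.
  have hv : (pi ord0 : nat) < m.
    have := ltn_ord (pi ord0); have : (pi ord0 : nat) != m by []. lia.
  set b := (pi^-1)%g ord_max.
  have hb : (pi b : nat) = m by rewrite /b permKV.
  have bn0 : (b : nat) != 0.
    apply/eqP => e; have e2 : b = ord0 by apply: val_inj.
    by move: hb; rewrite e2; lia.
  apply/existsP; exists ord0; apply/existsP; exists b.
  rewrite /E !forall_set1 cnd0 cnd2 hb.
  apply/and4P; split => //=; try lia; by rewrite eq_sym.
- move=> h; apply/existsP => -[a /existsP [b]].
  rewrite /E !forall_set1 cnd0 => /and4P [h1 h2 h3 _].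
  have key : forall c : 'I_m.+1, ((pi c : nat) == m) = ((c : nat) == 0).
    move=> c; have := inj_eq (@perm_inj _ pi) c ord0; rewrite (eqP h); exact.
  have k1 := key a; have k2 := key b.
  have h1' : (a : nat) != b by [].
  have := ltn_ord a; have := ltn_ord b; have := ltn_ord (pi a); have := ltn_ord (pi b).
  lia.
Qed.

Lemma symcl P q : sym_class P q -> forall s X Y, P = mk2 s X Y ->
  exists s' X' Y', q = mk2 s' X' Y' /\ forall n, a_n q n = a_n P n.
Proof.
move=> H s X Y eP; elim: H => [|r _ [s' [X' [Y' [-> IH]]]]|r _ [s' [X' [Y' [-> IH]]]]|r _ [s' [X' [Y' [-> IH]]]]].
- by exists s, X, Y.
- exists (s'^-1)%g, Y', X'; split => // n; exact: etrans (an_inv n s' X' Y') (IH n).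
- exists (rev_perm 2 * s')%g, (@rev_ord 3 @: X'), Y'; split => // n.
  exact: etrans (an_rev n s' X' Y') (IH n).
- exists (s' * rev_perm 2)%g, X', (@rev_ord 3 @: Y'); split => // n.
  exact: etrans (an_comp n s' X' Y') (IH n).
Qed.

Theorem mainTheorem2 (p : bvpat) :
  sym_class pat1 p \/ sym_class pat2 p \/ sym_class pat3 p ->
  forall n : nat, 0 < n -> a_n p n = (n.-1)`!.
Proof.
move=> H [//|m] _ /=.
case: H => [H|[H|H]].
- have [s [X [Y [_ ->]]]] := symcl H (erefl (mk2 1 set0 [set inord 0])).
  exact: count1.
- have [s [X [Y [_ ->]]]] := symcl H (erefl (mk2 1 [set inord 0] [set inord 1])).
  exact: count2.
- have [s [X [Y [_ ->]]]] := symcl H (erefl (mk2 1 [set inord 0] [set inord 2])).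
  exact: count3.
Qed.
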